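(* Let $\mathcal{I}$ be a countable nonempty set of database instances, $\mathcal{L}$ a query language, and $p$ an instance-independent pricing function. The following are equivalent: (1) $p$ has no information arbitrage; (2) there is a function $f:\Pi^{\mathcal{L}}_{\mathcal{I}}\to\mathbb{R}_{\ge 0}$ that is monotone over $\Pi^{\mathcal{L}}_{\mathcal{I}}$ such that $p(\mathbf{Q})=f(\mathcal{P}_{\mathbf{Q}})$ for all $\mathbf{Q}\in B(\mathcal{L})$.
   Context: A query is a deterministic function on $\mathcal{I}$. A query bundle $\mathbf{Q}$ is a finite tuple of queries from $\mathcal{L}$, evaluated componentwise; $B(\mathcal{L})$ is the set of finite query bundles, closed under union (concatenation). An instance-independent pricing function assigns a price $p(\mathbf{Q})\ge 0$ to each $\mathbf{Q}\in B(\mathcal{L})$. $\mathbf{Q}_2\twoheadrightarrow\mathbf{Q}_1$ means: for all $D',D''\in\mathcal{I}$, $\mathbf{Q}_2(D')=\mathbf{Q}_2(D'')$ implies $\mathbf{Q}_1(D')=\mathbf{Q}_1(D'')$. $p$ has no information arbitrage if $\mathbf{Q}_2\twoheadrightarrow\mathbf{Q}_1$ implies $p(\mathbf{Q}_2)\ge p(\mathbf{Q}_1)$. $\mathcal{P}_{\mathbf{Q}}$ is the partition of $\mathcal{I}$ into the equivalence classes of $D\sim D'\iff \mathbf{Q}(D)=\mathbf{Q}(D')$. For partitions, $\mathcal{P}_1\succeq\mathcal{P}_2$ ($\mathcal{P}_1$ refines $\mathcal{P}_2$) if every block of $\mathcal{P}_1$ is contained in some block of $\mathcal{P}_2$. $\Pi^{\mathcal{L}}_{\mathcal{I}}=\{\mathcal{P}_{\mathbf{Q}}:\mathbf{Q}\in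 B(\mathcal{L})\}$, ordered by $\succeq$. $f$ is monotone over $\Pi^{\mathcal{L}}_{\mathcal{I}}$ if $\mathcal{P}_1\succeq\mathcal{P}_2$ implies $f(\mathcal{P}_1)\ge f(\mathcal{P}_2)$. *)

(* Defs.v *)
From Stdlib Require Import Reals List.
Import ListNotations.
Open Scope R_scope.

Set Implicit Arguments.

Definition eval_bundle {Inst Out : Type} (Q : list (Inst -> Out)) (D : Inst)
  : list Out := map (fun q => q D) Q.

Definition in_bundles {Inst Out : Type} (L : (Inst -> Out) -> Prop)
  (Q : list (Inst -> Out)) : Prop := Forall L Q.

Definition determines {Inst Out : Type} (Q2 Q1 : list (Inst -> Out)) : Prop :=
  forall D' D'' : Inst,
    eval_bundle Q2 D' = eval_bundle Q2 D'' -> eval_bundle Q1 D' = eval_bundle Q1 D''.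

(* Instance-independent pricing function p on B(L) (values of p outside
   B(L) are irrelevant); nonnegativity on B(L). *)
Definition pricing_function {Inst Out : Type} (L : (Inst -> Out) -> Prop)
  (p : list (Inst -> Out) -> R) : Prop :=
  forall Q, in_bundles L Q -> 0 <= p Q.

Definition no_information_arbitrage {Inst Out : Type}
  (L : (Inst -> Out) -> Prop) (p : list (Inst -> Out) -> R) : Prop :=
  forall Q1 Q2, in_bundles L Q1 -> in_bundles L Q2 ->
    determines Q2 Q1 -> p Q2 >= p Q1.

(* Partitions of Inst are represented as sets of blocks. *)
Definition partition_t (Inst : Type) := (Inst -> Prop) -> Prop.

Definition partition_of {Inst Out : Type} (Q : list (Inst -> Out)) : partition_t Inst :=
  fun B => exists D : Inst, B = (fun D' => eval_bundle Q D' = eval_bundle Q D).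

Definition refines {Inst : Type} (P1 P2 : partition_t Inst) : Prop :=
  forall B1, P1 B1 -> exists B2, P2 B2 /\ (forall x, B1 x -> B2 x).

Definition Pi_L {Inst Out : Type} (L : (Inst -> Out) -> Prop) (P : partition_t Inst) : Prop :=
  exists Q, in_bundles L Q /\ P = partition_of Q.

Definition monotone_over {Inst Out : Type} (L : (Inst -> Out) -> Prop)
  (f : partition_t Inst -> R) : Prop :=
  forall P1 P2, Pi_L L P1 -> Pi_L L P2 -> refines P1 P2 -> f P1 >= f P2.

Definition countable_type (T : Type) : Prop :=
  exists e : nat -> T, forall x : T, exists n, e n = x.

(* Main.v *)
Require Import Defs.
From Stdlib Require Import Reals List.
From Stdlib Require Import Classical ClassicalEpsilon.
Open Scope R_scope.

Lemma ref_det {Inst Out : Type} (Q1 Q2 : list (Inst -> Out)) :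
  refines (partition_of Q2) (partition_of Q1) -> determines Q2 Q1.
Proof.
  intros H D' D'' E.
  destruct (H (fun D => eval_bundle Q2 D = eval_bundle Q2 D'')) as [B2 [[D HB] Hs]].
  - exists D''. reflexivity.
  - subst B2. rewrite (Hs D' E), (Hs D'' eq_refl). reflexivity.
Qed.

Lemma det_ref {Inst Out : Type} (Q1 Q2 : list (Inst -> Out)) :
  determines Q2 Q1 -> refines (partition_of Q2) (partition_of Q1).
Proof.
  intros H B1 [D HB]. subst B1.
  exists (fun D' => eval_bundle Q1 D' = eval_bundle Q1 D). split.
  - exists D. reflexivity.
  - intros x Hx. apply H. exact Hx.
Qed.

Lemma eq_det {Inst Out : Type} (Q1 Q2 : list (Inst -> Out)) :
  partition_of Q2 = partition_of Q1 -> determines Q2 Q1.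
Proof.
  intros E. apply ref_det. rewrite E. intros B HB. exists B. split; auto.
Qed.

Theorem theorem4 (Inst Out : Type) (Hcount : countable_type Inst)
  (Hne : inhabited Inst) (L : (Inst -> Out) -> Prop)
  (p : list (Inst -> Out) -> R) (Hp : pricing_function L p) :
  no_information_arbitrage L p <->
  exists f : partition_t Inst -> R,
    (forall P, Pi_L L P -> 0 <= f P) /\
    monotone_over L f /\
    (forall Q, in_bundles L Q -> p Q = f (partition_of Q)).
Proof.
  split.
  - intros NA.
    set (f := fun P : partition_t Inst =>
      match excluded_middle_informative (Pi_L L P) with
      | left h => p (proj1_sig (constructive_indefinite_description _ h))
      | right _ => 0 end).
    assert (Hf : forall Q, in_bundles L Q -> p Q = f (partition_of Q)).
    { intros Q HQ. unfold f.
      destruct (excluded_middle_informative _) as [h|n].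
      - destruct (constructive_indefinite_description _ h) as [Q' [HQ' E]]; simpl.
        apply Rle_antisym; apply Rge_le; apply NA; auto; apply eq_det; auto.
      - exfalso. apply n. exists Q. auto. }
    exists f. split; [|split]; auto.
    + intros P [Q [HQ E]]. subst P. rewrite <- Hf by auto. apply Hp; auto.
    + intros P1 P2 [Q1 [H1 E1]] [Q2 [H2 E2]] R12. subst.
      rewrite <- !Hf by auto. apply NA; auto. apply ref_det. auto.
  - intros [f [_ [Hm Hf]]] Q1 Q2 H1 H2 D.
    rewrite (Hf Q1 H1), (Hf Q2 H2). apply Hm.
    + exists Q2. auto.
    + exists Q1. auto.
    + apply det_ref. auto.
Qed.
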